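(* Let $A, E \in \mathbb{R}^{d_1\times d_2}$, let $B = A+E$, and let $d=\max\{d_1,d_2\}$. There exists a numerical constant $C_0>0$ such that for any $1\le r<d$: if $\sigma_r(A)>\sigma_{r+1}(A)$ and $\|E\|\le (\sigma_r(A)-\sigma_{r+1}(A))/2$, then $$\|B_r-A_r\|_{\mathrm F}\le C_0\sqrt{r}\,\|E\|\left(1+\frac{\sqrt{\sigma_{r+1}(A)\sigma_1(A)}}{\sigma_r(A)-\sigma_{r+1}(A)}\right).$$
   Context: For a matrix $M\in\mathbb{R}^{d_1\times d_2}$, $\sigma_1(M)\ge\sigma_2(M)\ge\cdots$ denote its singular values, and $M_r$ denotes its best rank-$r$ approximation (in Frobenius norm), i.e. the truncation of its singular value decomposition to the top $r$ singular values and vectors. $\|\cdot\|$ is the spectral norm and $\|\cdot\|_{\mathrm F}$ the Frobenius norm. *)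

(* Defs.v *)
From HB Require Import structures.
From mathcomp Require Import all_boot all_order all_algebra.
From mathcomp Require Import boolp classical_sets reals.
From mathcomp Require Import Rstruct.
From Stdlib Require Rdefinitions.
Notation R := Rdefinitions.R.

Set Implicit Arguments.
Unset Strict Implicit.
Unset Printing Implicit Defensive.

Import Order.TTheory GRing.Theory Num.Theory.
Local Open Scope ring_scope.
Local Open Scope classical_set_scope.

Definition vnorm (n : nat) (x : 'cV[R]_n) : R :=
  Num.sqrt (\sum_(i < n) x i 0 ^+ 2).

Definition frob (m n : nat) (M : 'M[R]_(m, n)) : R :=
  Num.sqrt (\sum_(i < m) \sum_(j < n) M i j ^+ 2).

Definition specnorm (m n : nat) (M : 'M[R]_(m, n)) : R :=
  sup [set vnorm (M *m x) | x in [set x : 'cV[R]_n | vnorm x <= 1]].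

Definition orthogonal (n : nat) (U : 'M[R]_n) : Prop := U *m U^T = 1%:M.

Definition diag_rect (m n : nat) (s : nat -> R) (r : nat) : 'M[R]_(m, n) :=
  \matrix_(i < m, j < n) (if (nat_of_ord i == nat_of_ord j) && (nat_of_ord i < r)%N
                           then s (nat_of_ord i) else 0).

(* (U, s, V) is a singular value decomposition of M:
   M = U * diag(s) * V^T with U, V orthogonal, and s (0-indexed: s k is the
   (k+1)-th singular value) nonnegative, nonincreasing, and 0 beyond
   min(m,n). *)
Definition is_svd (m n : nat) (M : 'M[R]_(m, n)) (U : 'M[R]_m) (s : nat -> R)
    (V : 'M[R]_n) : Prop :=
  [/\ orthogonal U /\ orthogonal V,
      (forall k, 0 <= s k),
      (forall k, s k.+1 <= s k),
      (forall k, (minn m n <= k)%N -> s k = 0) &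
      M = U *m diag_rect m n s (minn m n) *m V^T].

Definition svd_trunc (m n : nat) (U : 'M[R]_m) (s : nat -> R) (V : 'M[R]_n)
    (r : nat) : 'M[R]_(m, n) :=
  U *m diag_rect m n s r *m V^T.

(* Main.v *)
Require Import Defs.
From HB Require Import structures.
From mathcomp Require Import all_boot all_order all_algebra.
From mathcomp Require Import boolp classical_sets reals.
From mathcomp Require Import Rstruct.
From mathcomp Require Import lra ring zify.
From Stdlib Require Rdefinitions.
Import Order.TTheory GRing.Theory Num.Theory.
Local Open Scope ring_scope.
Set Implicit Arguments.
Unset Strict Implicit.
Unset Printing Implicit Defensive.

Definition dot n (x y : 'cV[R]_n) : R := \sum_(i < n) x i 0 * y i 0.
Definition nsq n (x : 'cV[R]_n) : R := dot x x.

Lemma dotE n (x y : 'cV[R]_n) : dot x y = (x^T *m y) 0 0.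
Proof. by rewrite /dot !mxE; apply: eq_bigr => i _; rewrite mxE. Qed.

Lemma dotC n (x y : 'cV[R]_n) : dot x y = dot y x.
Proof. by rewrite /dot; apply: eq_bigr => i _; rewrite mulrC. Qed.

Lemma dot_mul m n (A : 'M[R]_(m, n)) x y : dot x (A *m y) = dot (A^T *m x) y.
Proof. by rewrite !dotE trmx_mul trmxK mulmxA. Qed.

Lemma dotZr n a (x y : 'cV[R]_n) : dot x (a *: y) = a * dot x y.
Proof. by rewrite !dotE -scalemxAr mxE. Qed.
Lemma dotZl n a (x y : 'cV[R]_n) : dot (a *: x) y = a * dot x y.
Proof. by rewrite dotC dotZr dotC. Qed.
Lemma dotDr n (x y z : 'cV[R]_n) : dot x (y + z) = dot x y + dot x z.
Proof. by rewrite !dotE mulmxDr mxE. Qed.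
Lemma dotNr n (x y : 'cV[R]_n) : dot x (- y) = - dot x y.
Proof. by rewrite !dotE mulmxN mxE. Qed.
Lemma dotDl n (x y z : 'cV[R]_n) : dot (y + z) x = dot y x + dot z x.
Proof. by rewrite dotC dotDr !(dotC x). Qed.
Lemma dotNl n (x y : 'cV[R]_n) : dot (- y) x = - dot y x.
Proof. by rewrite dotC dotNr dotC. Qed.
Lemma dotBr n (x y z : 'cV[R]_n) : dot x (y - z) = dot x y - dot x z.
Proof. by rewrite dotDr dotNr. Qed.
Lemma dotBl n (x y z : 'cV[R]_n) : dot (y - z) x = dot y x - dot z x.
Proof. by rewrite dotDl dotNl. Qed.

Lemma nsq_ge0 n (x : 'cV[R]_n) : 0 <= nsq x.
Proof. by apply: sumr_ge0 => i _; rewrite -expr2 sqr_ge0. Qed.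

Lemma vnormE n (x : 'cV[R]_n) : vnorm x = Num.sqrt (nsq x).
Proof. by rewrite /vnorm /nsq /dot; congr Num.sqrt; apply: eq_bigr => i _; rewrite expr2. Qed.

Lemma vnorm_ge0 n (x : 'cV[R]_n) : 0 <= vnorm x.
Proof. by rewrite vnormE sqrtr_ge0. Qed.

Lemma vnorm_sq n (x : 'cV[R]_n) : vnorm x ^+ 2 = nsq x.
Proof. by rewrite vnormE sqr_sqrtr // nsq_ge0. Qed.

Lemma nsq_eq0 n (x : 'cV[R]_n) : nsq x = 0 -> x = 0.
Proof.
move=> h; apply/matrixP => i j; rewrite ord1 mxE.
have H := psumr_eq0P (P := xpredT) (F := fun i : 'I_n => x i 0 * x i 0) _ h.
have /eqP := H (fun i' _ => ltac:(by rewrite -expr2 sqr_ge0)) i isT.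
by rewrite mulf_eq0 orbb => /eqP.
Qed.
Lemma nsq_lin n a b (x y : 'cV[R]_n) :
  nsq (a *: x - b *: y) = a ^+ 2 * nsq x - 2 * a * b * dot x y + b ^+ 2 * nsq y.
Proof.
rewrite /nsq dotBl !dotBr !dotZl !dotZr (dotC y x); ring.
Qed.

Lemma CS n (x y : 'cV[R]_n) : dot x y ^+ 2 <= nsq x * nsq y.
Proof.
have := nsq_ge0 (nsq y *: x - dot x y *: y); rewrite nsq_lin.
have ->: nsq y ^+ 2 * nsq x - 2 * nsq y * dot x y * dot x y + dot x y ^+ 2 * nsq y
  = nsq y * (nsq x * nsq y - dot x y ^+ 2) by ring.
have [y0|ypos] := eqVneq (nsq y) 0.
  have -> : y = 0 by apply: nsq_eq0.
  move=> _; have d0 : forall z : 'cV[R]_n, dot z 0 = 0.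
    by move=> z; rewrite /dot big1 // => i _; rewrite mxE mulr0.
  by rewrite /nsq !d0 expr0n /= mulr0.
have yp : 0 < nsq y by rewrite lt_def ypos nsq_ge0.
by rewrite pmulr_rge0 // subr_ge0.
Qed.

Lemma CS' n (x y : 'cV[R]_n) : dot x y <= vnorm x * vnorm y.
Proof.
rewrite !vnormE -sqrtrM ?nsq_ge0 //.
apply: le_trans (ler_norm _) _.
rewrite -sqrtr_sqr ler_sqrt; first exact: CS.
by rewrite mulr_ge0 ?nsq_ge0.
Qed.

Lemma vnormD n (x y : 'cV[R]_n) : vnorm (x + y) <= vnorm x + vnorm y.
Proof.
rewrite -[vnorm x + _]ger0_norm ?addr_ge0 ?vnorm_ge0 // -sqrtr_sqr vnormE ler_sqrt ?sqr_ge0 //.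
rewrite /nsq dotDl !dotDr (dotC y x) sqrrD !vnorm_sq.
have := CS' x y; rewrite /nsq; lra.
Qed.

Lemma nsqZ n a (x : 'cV[R]_n) : nsq (a *: x) = a ^+ 2 * nsq x.
Proof. by rewrite /nsq dotZl dotZr mulrA expr2. Qed.

Lemma vnormZ n a (x : 'cV[R]_n) : vnorm (a *: x) = `|a| * vnorm x.
Proof. by rewrite !vnormE nsqZ sqrtrM ?sqr_ge0 // sqrtr_sqr. Qed.

Lemma vnormN n (x : 'cV[R]_n) : vnorm (- x) = vnorm x.
Proof. by rewrite -scaleN1r vnormZ normrN normr1 mul1r. Qed.

Lemma orthT n (U : 'M[R]_n) : Defs.orthogonal U -> U^T *m U = 1%:M.
Proof. by move=> h; apply: mulmx1C. Qed.

Lemma orthTT n (U : 'M[R]_n) : Defs.orthogonal U -> Defs.orthogonal U^T.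
Proof. by move=> h; rewrite /Defs.orthogonal trmxK orthT. Qed.

Lemma nsq_iso m n (A : 'M[R]_(m, n)) x : A^T *m A = 1%:M -> nsq (A *m x) = nsq x.
Proof. by move=> h; rewrite /nsq dot_mul mulmxA h mul1mx. Qed.

Lemma nsq_orth n (U : 'M[R]_n) x : Defs.orthogonal U -> nsq (U *m x) = nsq x.
Proof. by move=> h; apply: nsq_iso; apply: orthT. Qed.
Lemma nsq_orthT n (U : 'M[R]_n) x : Defs.orthogonal U -> nsq (U^T *m x) = nsq x.
Proof. by move=> h; apply: nsq_iso; rewrite trmxK. Qed.
Lemma mul_entry m n (M : 'M[R]_(m, n)) x i : (M *m x) i 0 = dot (row i M)^T x.
Proof. by rewrite !mxE /dot; apply: eq_bigr => j _; rewrite !mxE. Qed.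

Lemma nsq_mul_bound m n (M : 'M[R]_(m, n)) x :
  nsq (M *m x) <= (\sum_(i < m) nsq (row i M)^T) * nsq x.
Proof.
rewrite mulr_suml /nsq {1}/dot; apply: ler_sum => i _.
by rewrite mul_entry -expr2 CS.
Qed.

Local Open Scope classical_set_scope.

Lemma spec_ub m n (M : 'M[R]_(m, n)) x : vnorm x <= 1 -> vnorm (M *m x) <= specnorm M.
Proof.
move=> hx; rewrite /specnorm; apply: ub_le_sup; last by exists x.
exists (Num.sqrt (\sum_(i < m) nsq (row i M)^T)) => _ [y hy <-].
rewrite vnormE ler_sqrt ?sumr_ge0 // => [|i _]; last exact: nsq_ge0.
apply: le_trans (nsq_mul_bound M y) _.
have hy' : nsq y <= 1 by rewrite -vnorm_sq -(expr1n _ 2) lerXn2r ?nnegrE ?vnorm_ge0.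
apply: ler_piMr => //; apply: sumr_ge0 => i _; exact: nsq_ge0.
Qed.

Lemma spec_ge0 m n (M : 'M[R]_(m, n)) : 0 <= specnorm M.
Proof.
apply: le_trans (spec_ub M (x := 0) _); first exact: vnorm_ge0.
by rewrite vnormE /nsq /dot big1 ?sqrtr0 // => i _; rewrite mxE mul0r.
Qed.

Lemma vnorm0 n : vnorm (0 : 'cV[R]_n) = 0.
Proof. by rewrite vnormE /nsq /dot big1 ?sqrtr0 // => i _; rewrite mxE mul0r. Qed.

Lemma spec_mul m n (M : 'M[R]_(m, n)) x : vnorm (M *m x) <= specnorm M * vnorm x.
Proof.
have [x0|xn0] := eqVneq (vnorm x) 0.
  have -> : x = 0 by apply: nsq_eq0; rewrite -vnorm_sq x0 expr0n.
  by rewrite mulmx0 !vnorm0 mulr0.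
have xp : 0 < vnorm x by rewrite lt_def xn0 vnorm_ge0.
have := spec_ub M (x := (vnorm x)^-1 *: x).
rewrite vnormZ -scalemxAr vnormZ ger0_norm ?invr_ge0 ?vnorm_ge0 // mulVf //.
move=> /(_ (lexx _)); rewrite -(ler_pM2l xp) mulrA mulfV // mul1r.
by rewrite mulrC.
Qed.

Lemma nsq_spec m n (M : 'M[R]_(m, n)) x : nsq (M *m x) <= specnorm M ^+ 2 * nsq x.
Proof.
rewrite -!vnorm_sq -exprMn lerXn2r ?nnegrE ?mulr_ge0 ?vnorm_ge0 ?spec_ge0 //.
exact: spec_mul.
Qed.

Lemma spec_tr m n (M : 'M[R]_(m, n)) w : vnorm (M^T *m w) <= specnorm M * vnorm w.
Proof.
have h : vnorm (M^T *m w) ^+ 2 <= specnorm M * vnorm (M^T *m w) * vnorm w.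
  rewrite vnorm_sq /nsq -dot_mul dotC.
  apply: le_trans (CS' _ _) _; apply: ler_wpM2r; first exact: vnorm_ge0.
  exact: spec_mul.
have [z|zn] := eqVneq (vnorm (M^T *m w)) 0.
  by rewrite z mulr_ge0 ?spec_ge0 ?vnorm_ge0.
have zp : 0 < vnorm (M^T *m w) by rewrite lt_def zn vnorm_ge0.
by move: h; rewrite expr2 (mulrC (specnorm M)) -mulrA ler_pM2l.
Qed.

Lemma nsq_spec_tr m n (M : 'M[R]_(m, n)) x : nsq (M^T *m x) <= specnorm M ^+ 2 * nsq x.
Proof.
rewrite -!vnorm_sq -exprMn lerXn2r ?nnegrE ?mulr_ge0 ?vnorm_ge0 ?spec_ge0 //.
exact: spec_tr.
Qed.
Definition ev n (p : nat) : 'cV[R]_n := \col_i ((i : nat) == p)%:R.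

Lemma big_pick n p (F : 'I_n -> R) :
  \sum_(i < n) ((i : nat) == p)%:R * F i = oapp F 0 (insub p).
Proof.
case: insubP => [i hp <-|hp] /=.
  rewrite (bigD1 i) //= eqxx mul1r big1 ?addr0 // => j ji.
  have -> : ((j : nat) == i) = false by apply/negbTE; rewrite val_eqE.
  by rewrite mul0r.
rewrite big1 // => j _; have -> : ((j : nat) == p) = false.
  by apply/negbTE; apply: contra hp => /eqP <-.
by rewrite mul0r.
Qed.

Lemma dot_ev n p (y : 'cV[R]_n) : dot (ev n p) y = oapp (fun i => y i 0) 0 (insub p).
Proof. by rewrite /dot -big_pick; apply: eq_bigr => i _; rewrite mxE. Qed.

Lemma dot_ev_ord n (i : 'I_n) (y : 'cV[R]_n) : dot (ev n i) y = y i 0.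
Proof.
rewrite dot_ev; case: insubP => [j _ /val_inj -> //|]; by rewrite ltn_ord.
Qed.

Lemma dot_ev_sq n p (y : 'cV[R]_n) :
  dot (ev n p) y ^+ 2 = \sum_(i < n) ((i : nat) == p)%:R * y i 0 ^+ 2.
Proof. by rewrite dot_ev big_pick; case: insub => [i|] /=; rewrite ?expr0n. Qed.

Lemma sum_ind n p : \sum_(i < n) ((i : nat) == p)%:R = (p < n)%:R :> R.
Proof.
transitivity (\sum_(i < n) ((i : nat) == p)%:R * (1 : R)).
  by apply: eq_bigr => i _; rewrite mulr1.
rewrite (big_pick p (fun _ => (1 : R))).
by case: insubP => [i -> _|/negbTE ->].
Qed.

Lemma sum_ev_sq k n (y : 'cV[R]_n) : \sum_(p < k) dot (ev n p) y ^+ 2 <= nsq y.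
Proof.
under eq_bigr do rewrite dot_ev_sq.
rewrite exchange_big /nsq /dot; apply: ler_sum => i _.
rewrite -mulr_suml -expr2.
under eq_bigr do rewrite eq_sym.
rewrite sum_ind; case: (i < k)%N; rewrite ?mul1r ?mul0r ?sqr_ge0 //.
Qed.

Lemma sum_orth_sq k n (U : 'M[R]_n) (w : 'cV[R]_n) :
  Defs.orthogonal U -> \sum_(p < k) dot (U *m ev n p) w ^+ 2 <= nsq w.
Proof.
move=> hU; under eq_bigr do rewrite dotC dot_mul dotC.
by apply: le_trans (sum_ev_sq _ _) _; rewrite nsq_orthT.
Qed.

Lemma nsq_ev n p : nsq (ev n p) <= 1.
Proof.
rewrite /nsq dot_ev; case: insubP => [i _ hi|] /=; last by rewrite ler01.
by rewrite mxE -hi eqxx.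
Qed.

Section Diag.
Variables (m n : nat) (s : nat -> R) (c0 : nat).
Hypothesis hs : forall k, (minn m n <= k)%N -> s k = 0.
Local Notation D := (diag_rect m n s c0).
Definition sp (q : nat) := if (q < c0)%N then s q else 0.

Lemma diag_ev q : D *m ev n q = sp q *: ev m q.
Proof.
apply/matrixP => i j; rewrite ord1 !mxE.
under eq_bigr do rewrite !mxE mulrC.
rewrite big_pick /sp; case: insubP => [l hq <-|hq] /=.
  by case: (eqVneq (i : nat) l) => [e|ne] /=; [rewrite e mulr1|rewrite mulr0].
case: (eqVneq (i : nat) q) => [e|ne]; last by rewrite mulr0.
rewrite hs ?if_same ?mul0r //; rewrite -e geq_min.
by apply/orP; right; rewrite leqNgt; move: hq; rewrite e.
Qed.

Lemma diagT_ev p : D^T *m ev m p = sp p *: ev n p.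
Proof.
apply/matrixP => i j; rewrite ord1 !mxE.
under eq_bigr do rewrite !mxE mulrC.
rewrite big_pick /sp; case: insubP => [l hq <-|hq] /=.
  by case: (eqVneq (l : nat) i) => [e|ne] /=; [rewrite e mulr1|rewrite mulr0].
case: (eqVneq (i : nat) p) => [e|ne]; last by rewrite mulr0.
rewrite hs ?if_same ?mul0r //; rewrite -e geq_min.
by apply/orP; left; rewrite leqNgt; move: hq; rewrite e.
Qed.

Lemma nsq_diag (c : 'cV[R]_n) : nsq (D *m c) = \sum_(i < n) sp i ^+ 2 * c i 0 ^+ 2.
Proof.
rewrite /nsq dot_mul /dot; apply: eq_bigr => i _.
have -> : (D^T *m (D *m c)) i 0 = sp i ^+ 2 * c i 0.
  rewrite -[LHS](dot_ev_ord i) dot_mul trmxK diag_ev dotZl.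
  rewrite dot_mul diagT_ev dotZl dot_ev_ord; ring.
ring.
Qed.
End Diag.
Lemma sp_min m n (s : nat -> R) q :
  (forall k, (minn m n <= k)%N -> s k = 0) -> sp s (minn m n) q = s q.
Proof. by move=> hs; rewrite /sp; case: ltnP => // h; rewrite hs. Qed.

Lemma noninc (s : nat -> R) : (forall k, s k.+1 <= s k) ->
  forall i j, (i <= j)%N -> s j <= s i.
Proof.
move=> h i j /subnK <-; elim: (j - i)%N => [|d ih]; first by rewrite add0n.
by rewrite addSn; apply: le_trans ih.
Qed.

Lemma svd_left m n (U : 'M[R]_m) (s : nat -> R) (V : 'M[R]_n) c0 p w :
  Defs.orthogonal U -> (forall k, (minn m n <= k)%N -> s k = 0) ->
  dot (U *m ev m p) ((U *m diag_rect m n s c0 *m V^T) *m w)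
  = sp s c0 p * dot (V *m ev n p) w.
Proof.
move=> oU hs; rewrite dot_mul !trmx_mul trmxK -!mulmxA (mulmxA U^T) orthT // mul1mx.
by rewrite diagT_ev // -scalemxAr dotZl.
Qed.

Lemma svd_right m n (U : 'M[R]_m) (s : nat -> R) (V : 'M[R]_n) c0 q z :
  Defs.orthogonal V -> (forall k, (minn m n <= k)%N -> s k = 0) ->
  dot z ((U *m diag_rect m n s c0 *m V^T) *m (V *m ev n q))
  = sp s c0 q * dot z (U *m ev m q).
Proof.
move=> oV hs; rewrite -!mulmxA (mulmxA V^T) orthT // mul1mx diag_ev //.
by rewrite -!scalemxAr dotZr.
Qed.

Lemma weyl m n (M D : 'M[R]_(m, n)) UM sM VM UN sN VN e :
  is_svd M UM sM VM -> is_svd (M + D) UN sN VN ->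
  (forall x, vnorm (D *m x) <= e * vnorm x) -> 0 <= e ->
  forall k, sN k <= sM k + e.
Proof.
move=> [[oUM oVM] sM0 sMd sMv eM] [[oUN oVN] sN0 sNd sNv eN] hD e0 k.
case: (leqP (minn m n) k) => hk; first by rewrite sNv // addr_ge0.
move: hk; rewrite leq_min => /andP [km kn].
pose Z0 := VM^T *m VN.
have hn : (n.-1 <= n)%N := leq_pred n.
pose K1 : 'M[R]_(n, n.-1) := \matrix_(l, j) (if (j < k)%N then Z0 (widen_ord hn j) l
   else ((l : nat) == j.+1)%:R).
have [w [wn0 wK]] : exists w : 'rV[R]_n, w != 0 /\ w *m K1 = 0.
  case/boolP: [exists i, row i (kermx K1) != 0] => [/existsP [i hi]|/existsPn h].
    by exists (row i (kermx K1)); rewrite -row_mul mulmx_ker row0.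
  have X0 : kermx K1 = 0.
    apply/row_matrixP => i; rewrite row0; apply/eqP; by move: (h i); rewrite negbK.
  have := mxrank_ker K1; rewrite X0 mxrank0 => /esym /eqP; rewrite subn_eq0.
  have := rank_leq_col K1 => h1 h2; have := leq_trans h2 h1.
  by rewrite leqNgt ltn_predL (leq_ltn_trans (leq0n k) kn).
pose c := w^T.
have hc2 : forall l : 'I_n, (k < l)%N -> c l 0 = 0.
  move=> l kl.
  have lj : (l.-1 < n.-1)%N by have := ltn_ord l; lia.
  have := congr1 (fun X : 'M[R]_(1, n.-1) => X 0 (Ordinal lj)) wK; rewrite /K1 mxE; under eq_bigr do rewrite mxE; rewrite /=.
  have -> : (l.-1 < k)%N = false by apply/negbTE; rewrite -leqNgt; lia.
  rewrite (bigD1 l) //= mxE prednK ?eqxx ?mulr1; last by lia.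
  rewrite big1 ?addr0 => [h|l' hl']; first by rewrite /c mxE.
  by rewrite (_ : (l' == l :> nat) = false) ?mulr0 //; exact: negbTE hl'.
have hc3 : forall j0 : 'I_n, (j0 < k)%N -> (Z0 *m c) j0 0 = 0.
  move=> j0 jk.
  have jj : (j0 < n.-1)%N by lia.
  have := congr1 (fun X : 'M[R]_(1, n.-1) => X 0 (Ordinal jj)) wK; rewrite /K1 mxE; under eq_bigr do rewrite mxE; rewrite /= jk mxE => h.
  rewrite -h mxE; apply: eq_bigr => l _; rewrite !mxE mulrC; congr (_ * _).
  by rewrite (_ : widen_ord hn (Ordinal jj) = j0) //; apply: val_inj.
have cpos : 0 < nsq c.
  rewrite lt_def nsq_ge0 andbT; apply/eqP => /nsq_eq0 c0.
  by move: wn0; rewrite -[w]trmxK -/c c0 trmx0 eqxx.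
pose x := VN *m c.
have nx : nsq x = nsq c by rewrite nsq_orth.
have lowN : sN k ^+ 2 * nsq c <= nsq ((M + D) *m x).
  rewrite eN /x -!mulmxA (mulmxA VN^T) orthT // mul1mx nsq_orth // nsq_diag //.
  rewrite /nsq /dot mulr_sumr; apply: ler_sum => i _; rewrite sp_min // -expr2.
  case: (leqP i k) => hik.
    apply: ler_wpM2r; first by rewrite sqr_ge0.
    by rewrite lerXn2r ?nnegrE ?sN0 //; apply: noninc.
  by rewrite hc2 // expr0n /= !mulr0.
have upM : nsq (M *m x) <= sM k ^+ 2 * nsq c.
  have hz : nsq (Z0 *m c) = nsq c by rewrite /Z0 -mulmxA nsq_orthT // nsq_orth.
  rewrite eM /x -!mulmxA (mulmxA VM^T) -/Z0 nsq_orth // nsq_diag // -hz.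
  rewrite /nsq /dot mulr_sumr; apply: ler_sum => i _; rewrite sp_min // -expr2.
  case: (ltnP i k) => hik; first by rewrite hc3 // expr0n /= !mulr0.
  apply: ler_wpM2r; first by rewrite sqr_ge0.
  by rewrite lerXn2r ?nnegrE ?sM0 //; apply: noninc.
have vc : 0 < vnorm c by rewrite vnormE sqrtr_gt0.
have h1 : sN k * vnorm c <= vnorm ((M + D) *m x).
  by rewrite -ler_sqr ?nnegrE ?mulr_ge0 ?vnorm_ge0 ?sN0 // exprMn !vnorm_sq.
have h2 : vnorm (M *m x) <= sM k * vnorm c.
  by rewrite -ler_sqr ?nnegrE ?mulr_ge0 ?vnorm_ge0 ?sM0 // exprMn !vnorm_sq.
have h3 : vnorm (D *m x) <= e * vnorm c.
  by rewrite (vnormE c) -nx -vnormE hD.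
have h4 := vnormD (M *m x) (D *m x); rewrite -mulmxDl in h4.
rewrite -(ler_pM2r vc) mulrDl; apply: le_trans h1 _; apply: le_trans h4 _.
exact: lerD.
Qed.
Lemma key (s t x a b g : R) : 0 < g -> 0 <= s -> s + g <= t ->
  (t ^+ 2 - s ^+ 2) * x = s * a + t * b -> g * `|s * x| <= s * (`|a| + `|b|).
Proof.
move=> g0 s0 st H.
have tp : 0 < t + s by lra.
have e1 : `|s * x| * ((t - s) * (t + s)) = s * `|s * a + t * b|.
  have P0 : 0 <= (t - s) * (t + s) by rewrite mulr_ge0 //; lra.
  transitivity (`|s * (s * a + t * b)|); last by rewrite normrM ger0_norm.
  rewrite -H -{1}(ger0_norm P0) -normrM; congr Num.norm; ring.
have e2 : `|s * a + t * b| <= (t + s) * (`|a| + `|b|).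
  have t0 : 0 <= t by lra.
  apply: le_trans (ler_normD _ _) _; rewrite !normrM (ger0_norm s0) (ger0_norm t0).
  have := mulr_ge0 t0 (normr_ge0 a); have := mulr_ge0 s0 (normr_ge0 b); nra.
have e3 : `|s * x| * (t - s) <= s * (`|a| + `|b|).
  rewrite -(ler_pM2r tp) -mulrA e1.
  have := ler_wpM2l s0 e2; lra.
apply: le_trans e3; rewrite mulrC ler_wpM2l ?normr_ge0 //; lra.
Qed.

Lemma sq_sum_le (f h : R) : (`|f| + `|h|) ^+ 2 <= 2 * (f ^+ 2 + h ^+ 2).
Proof.
have nf : `|f| ^+ 2 = f ^+ 2 by rewrite real_normK // num_real.
have nh : `|h| ^+ 2 = h ^+ 2 by rewrite real_normK // num_real.
have := sqr_ge0 (`|f| - `|h|); rewrite !sqrrD sqrrN nf nh; lra.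
Qed.

Lemma point_aux (g L f h z : R) : 0 < g -> 0 <= L ->
  g * `|z| <= L * (`|f| + `|h|) ->
  g ^+ 2 * (f + z) ^+ 2 <= (2 * g ^+ 2 + 4 * L ^+ 2) * (f ^+ 2 + h ^+ 2).
Proof.
move=> g0 L0 k1.
have A1 : g ^+ 2 * z ^+ 2 <= 2 * L ^+ 2 * (f ^+ 2 + h ^+ 2).
  have nz : z ^+ 2 = `|z| ^+ 2 by rewrite real_normK // num_real.
  rewrite nz -exprMn; apply: le_trans (_ : (L * (`|f| + `|h|)) ^+ 2 <= _).
    by rewrite ler_sqr ?nnegrE ?mulr_ge0 ?addr_ge0 ?normr_ge0 //; lra.
  have := ler_wpM2l (sqr_ge0 L) (sq_sum_le f h); rewrite exprMn; lra.
have A2 : g ^+ 2 * (f + z) ^+ 2 <= g ^+ 2 * (2 * f ^+ 2 + 2 * z ^+ 2).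
  apply: ler_wpM2l; first exact: sqr_ge0.
  have := sqr_ge0 (f - z); rewrite !sqrrD sqrrN; lra.
have A3 : 0 <= g ^+ 2 * h ^+ 2 by rewrite mulr_ge0 ?sqr_ge0.
have A4 : 0 <= L ^+ 2 * (f ^+ 2 + h ^+ 2) by rewrite mulr_ge0 ?sqr_ge0 ?addr_ge0 ?sqr_ge0.
lra.
Qed.

Lemma point (bp bq : bool) (sb sa x y g L : R) : 0 < g -> 0 <= sb -> 0 <= sa -> 0 <= L ->
  (bp && ~~ bq -> sa + g <= sb /\ sa <= L) ->
  (~~ bp && bq -> sb + g <= sa /\ sb <= L) ->
  g ^+ 2 * ((if bp then sb else 0) * x - (if bq then sa else 0) * y) ^+ 2
  <= (2 * g ^+ 2 + 4 * L ^+ 2) * ((bp%:R : R) + (bq%:R : R))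
     * ((sb * x - sa * y) ^+ 2 + (sb * y - sa * x) ^+ 2).
Proof.
move=> g0 sb0 sa0 L0 h1 h2.
set f := sb * x - sa * y; set h := sb * y - sa * x.
have f2 := sqr_ge0 f; have h2' := sqr_ge0 h.
case: bp h1 h2; case: bq => /= h1 h2.
- rewrite -/f.
  have gg : 0 <= g ^+ 2 * f ^+ 2 by rewrite mulr_ge0 ?sqr_ge0.
  have gh : 0 <= g ^+ 2 * h ^+ 2 by rewrite mulr_ge0 ?sqr_ge0.
  have Lf : 0 <= L ^+ 2 * (f ^+ 2 + h ^+ 2) by rewrite mulr_ge0 ?sqr_ge0 ?addr_ge0.
  nra.
- have [hg hL] := h1 isT.
  have k := key (x := y) (a := f) (b := h) g0 sa0 hg ltac:(rewrite /f /h; ring).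
  have k1 : g * `|sa * y| <= L * (`|f| + `|h|).
    apply: le_trans k _; apply: ler_wpM2r; rewrite ?addr_ge0 ?normr_ge0 //.
  have ee : sb * x - 0 * y = f + sa * y by rewrite /f; ring.
  rewrite ee addr0 mulr1.
  exact: point_aux k1.
- have [hg hL] := h2 isT.
  have k := key (x := x) (a := - f) (b := - h) g0 sb0 hg ltac:(rewrite /f /h; ring).
  rewrite !normrN in k.
  have k1 : g * `|sb * x| <= L * (`|f| + `|h|).
    apply: le_trans k _; apply: ler_wpM2r; rewrite ?addr_ge0 ?normr_ge0 //.
  have ee : 0 * x - sa * y = f + - (sb * x) by rewrite /f; ring.
  rewrite ee add0r mulr1.
  by apply: point_aux; rewrite ?normrN.
- by rewrite !mul0r subr0 expr0n /= addr0 !mulr0 mul0r.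
Qed.
Local Close Scope classical_set_scope.

Lemma mul_ev_entry m n (A : 'M[R]_(m, n)) (q : 'I_n) i : (A *m ev n q) i 0 = A i q.
Proof. by rewrite mul_entry dotC dot_ev_ord !mxE. Qed.

Lemma nsq_row m n (A : 'M[R]_(m, n)) i : nsq (row i A)^T = \sum_(j < n) A i j ^+ 2.
Proof. by rewrite /nsq /dot; apply: eq_bigr => j _; rewrite !mxE expr2. Qed.

Lemma nsq_col m n (A : 'M[R]_(m, n)) (q : 'I_n) : nsq (A *m ev n q) = \sum_(i < m) A i q ^+ 2.
Proof. by rewrite /nsq /dot; apply: eq_bigr => i _; rewrite mul_ev_entry expr2. Qed.

Lemma frob_inv m n (M : 'M[R]_(m, n)) (U : 'M[R]_m) (V : 'M[R]_n) :
  Defs.orthogonal U -> Defs.orthogonal V ->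
  \sum_(i < m) \sum_(j < n) M i j ^+ 2
  = \sum_(p < m) \sum_(q < n) dot (U *m ev m p) (M *m (V *m ev n q)) ^+ 2.
Proof.
move=> oU oV; rewrite [RHS]exchange_big /=.
have inner : forall w : 'cV[R]_m, \sum_(p < m) dot (U *m ev m p) w ^+ 2 = nsq w.
  move=> w; rewrite -(nsq_orthT w oU) /nsq {2}/dot; apply: eq_bigr => p _.
  by rewrite dotC dot_mul dotC dot_ev_ord expr2.
under [RHS]eq_bigr do rewrite inner mulmxA nsq_col.
rewrite [RHS]exchange_big /=; apply: eq_bigr => i _.
rewrite -nsq_row -(nsq_row (M *m V)) row_mul trmx_mul nsq_orthT //.
Qed.

Lemma count_lt d r : \sum_(p < d) ((p < r)%N%:R : R) <= r%:R.
Proof.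
under eq_bigr do rewrite -sum_ind.
rewrite exchange_big /=.
apply: le_trans (_ : \sum_(j < r) (1 : R) <= _).
  apply: ler_sum => j _; under eq_bigr do rewrite eq_sym.
  by rewrite sum_ind; case: (j < d)%N; rewrite ?ler01.
by rewrite sumr_const card_ord.
Qed.
Lemma part (d d' r : nat) (F : nat -> nat -> R) c :
  (forall p, \sum_(q < d') F p q <= c) -> (forall p q, 0 <= F p q) ->
  \sum_(p < d) \sum_(q < d') ((p < r)%N%:R : R) * F p q <= r%:R * c.
Proof.
move=> hF F0.
have c0 : 0 <= c by apply: le_trans (hF 0%N); apply: sumr_ge0 => q _.
under eq_bigr do rewrite -mulr_sumr.
apply: le_trans (_ : \sum_(p < d) ((p < r)%N%:R : R) * c <= _).
  by apply: ler_sum => p _; apply: ler_wpM2l; rewrite ?ler0n.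
by rewrite -mulr_suml; apply: ler_wpM2r => //; apply: count_lt.
Qed.

Lemma final_arith (S r e del T sAr : R) : 0 < del -> 0 <= e -> 0 <= r -> 0 <= sAr ->
  sAr <= T * del -> 0 <= T -> e <= del / 2 ->
  (del / 2) ^+ 2 * S <= (2 * (del / 2) ^+ 2 + 4 * (sAr + e) ^+ 2) * (4 * r * e ^+ 2) ->
  S <= 81 * r * e ^+ 2 * (1 + T) ^+ 2.
Proof.
move=> d0 e0 r0 s0 sT T0 ed H.
have L2 : (sAr + e) ^+ 2 <= (del * (T + 1/2)) ^+ 2.
  rewrite ler_sqr ?nnegrE ?addr_ge0 ?mulr_ge0 //; try lra.
have K : 2 * (del / 2) ^+ 2 + 4 * (sAr + e) ^+ 2 <= del ^+ 2 * (1/2 + 4 * (T + 1/2) ^+ 2).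
  rewrite exprMn in L2; lra.
have re : 0 <= 4 * r * e ^+ 2 by rewrite !mulr_ge0 ?sqr_ge0 //.
have H2 := le_trans H (ler_wpM2r re K).
have d2 : 0 < del ^+ 2 by rewrite exprn_gt0.
have H3 : S <= 4 * ((1/2 + 4 * (T + 1/2) ^+ 2) * (4 * r * e ^+ 2)).
  rewrite -(ler_pM2l d2); move: H2; rewrite expr_div_n; lra.
apply: le_trans H3 _.
have Q : 4 * (1/2 + 4 * (T + 1/2) ^+ 2) * 4 <= 81 * (1 + T) ^+ 2.
  rewrite !sqrrD; nra.
have re' : 0 <= r * e ^+ 2 by rewrite mulr_ge0 ?sqr_ge0.
have := ler_wpM2r re' Q; lra.
Qed.

Theorem lemma1 :
  exists C0 : R, 0 < C0 /\
  forall (d1 d2 : nat) (A E : 'M[R]_(d1, d2))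
         (UA : 'M[R]_d1) (sA : nat -> R) (VA : 'M[R]_d2)
         (UB : 'M[R]_d1) (sB : nat -> R) (VB : 'M[R]_d2) (r : nat),
    is_svd A UA sA VA ->
    is_svd (A + E) UB sB VB ->
    (1 <= r)%N -> (r < maxn d1 d2)%N ->
    sA r < sA r.-1 ->
    specnorm E <= (sA r.-1 - sA r) / 2 ->
    frob (svd_trunc UB sB VB r - svd_trunc UA sA VA r)
      <= C0 * Num.sqrt (r%:R) * specnorm E
         * (1 + Num.sqrt (sA r * sA 0%N) / (sA r.-1 - sA r)).
Proof.
exists 9; split; first by [].
move=> d1 d2 A E UA sA VA UB sB VB r hA hB r1 rmax gap hE.
have hA' := hA; have hB' := hB.
case: hA => [[oUA oVA] sA0 sAd sAv eA].
case: hB => [[oUB oVB] sB0 sBd sBv eB].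
set e := specnorm E in hE *.
set del := sA r.-1 - sA r in hE *.
have dp : 0 < del by rewrite subr_gt0.
have e0 : 0 <= e := spec_ge0 E.
have w1 : sB r <= sA r + e := weyl hA' hB' (spec_mul E) e0 r.
have w2 : sA r.-1 <= sB r.-1 + e.
  have hA2 : is_svd ((A + E) + - E) UA sA VA by rewrite addrK.
  apply: (weyl hB' hA2 _ e0) => z; rewrite mulNmx vnormN; exact: spec_mul.
pose x p q := dot (VB *m ev d2 p) (VA *m ev d2 q).
pose y p q := dot (UB *m ev d1 p) (UA *m ev d1 q).
pose f p q := dot (UB *m ev d1 p) (E *m (VA *m ev d2 q)).
pose h p q := dot (UA *m ev d1 q) (E *m (VB *m ev d2 p)).
have EE : E = (A + E) - A by rewrite (addrC A) addrK.
have hf : forall p q, f p q = sB p * x p q - sA q * y p q.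
  move=> p q; rewrite /f {1}EE mulmxBl dotBr {1}eB svd_left // sp_min //.
  by rewrite {1}eA svd_right // sp_min.
have hh : forall p q, h p q = sB p * y p q - sA q * x p q.
  move=> p q; rewrite /h {1}EE mulmxBl dotBr {1}eB svd_right // sp_min //.
  by rewrite {1}eA svd_left // sp_min // /x /y dotC (dotC (VA *m _)).
pose G p q := dot (UB *m ev d1 p)
  ((svd_trunc UB sB VB r - svd_trunc UA sA VA r) *m (VA *m ev d2 q)).
have hG : forall p q, G p q = sp sB r p * x p q - sp sA r q * y p q.
  by move=> p q; rewrite /G mulmxBl dotBr /svd_trunc svd_left // svd_right.
pose g := del / 2.
have g0 : 0 < g by rewrite divr_gt0.
pose L := sA r + e.
have L0 : 0 <= L by rewrite addr_ge0.
have pt : forall (p : 'I_d1) (q : 'I_d2), g ^+ 2 * G p q ^+ 2 <=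
    (2 * g ^+ 2 + 4 * L ^+ 2) * (((p < r)%N%:R : R) + ((q < r)%N%:R : R))
    * (f p q ^+ 2 + h p q ^+ 2).
  move=> p q; rewrite hG hf hh /sp; apply: point => //.
    move=> /andP [pr]; rewrite -leqNgt => rq; split.
      have a1 : sA q <= sA r by apply: (noninc sAd).
      have a2 : sB r.-1 <= sB p by apply: (noninc sBd); lia.
      have hd : del = sA r.-1 - sA r by []; rewrite /g; lra.
    by apply: le_trans (noninc sAd rq) _; rewrite /L lerDl.
  move=> /andP []; rewrite -leqNgt => rp qr; split.
    have a1 : sB p <= sB r by apply: (noninc sBd); lia.
    have a2 : sA r.-1 <= sA q by apply: (noninc sAd); lia.
    have hd : del = sA r.-1 - sA r by []; rewrite /g; lra.
  exact: le_trans (noninc sBd rp) w1.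
have e2b : forall n (U : 'M[R]_n) p, Defs.orthogonal U ->
    e ^+ 2 * nsq (U *m ev n p) <= e ^+ 2.
  by move=> n U p oU; apply: ler_piMr; rewrite ?sqr_ge0 // nsq_orth // nsq_ev.
have two : 2 * e ^+ 2 = e ^+ 2 + e ^+ 2 by ring.
have rowF : forall p : nat, \sum_(q < d2) (f p q ^+ 2 + h p q ^+ 2) <= 2 * e ^+ 2.
  move=> p; rewrite big_split /= two; apply: lerD.
    rewrite /f; under eq_bigr => q _ do rewrite dot_mul dotC.
    apply: le_trans (sum_orth_sq _ _ oVA) _; apply: le_trans (nsq_spec_tr _ _) _.
    exact: e2b.
  rewrite /h; apply: le_trans (sum_orth_sq _ _ oUA) _; apply: le_trans (nsq_spec _ _) _.
  exact: e2b.
have colF : forall q : nat, \sum_(p < d1) (f p q ^+ 2 + h p q ^+ 2) <= 2 * e ^+ 2.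
  move=> q; rewrite big_split /= two; apply: lerD.
    rewrite /f; apply: le_trans (sum_orth_sq _ _ oUB) _; apply: le_trans (nsq_spec _ _) _.
    exact: e2b.
  rewrite /h; under eq_bigr => p _ do rewrite dot_mul dotC.
  apply: le_trans (sum_orth_sq _ _ oVB) _; apply: le_trans (nsq_spec_tr _ _) _.
  exact: e2b.
have F0 : forall p q, 0 <= f p q ^+ 2 + h p q ^+ 2 by move=> p q; rewrite addr_ge0 ?sqr_ge0.
pose S := \sum_(p < d1) \sum_(q < d2) G p q ^+ 2.
have SB : g ^+ 2 * S <= (2 * g ^+ 2 + 4 * L ^+ 2) * (4 * r%:R * e ^+ 2).
  rewrite /S mulr_sumr.
  apply: le_trans (_ : _ <= \sum_(p < d1) \sum_(q < d2) (2 * g ^+ 2 + 4 * L ^+ 2) *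
      ((((p < r)%N%:R : R) * (f p q ^+ 2 + h p q ^+ 2)) +
       (((q < r)%N%:R : R) * (f p q ^+ 2 + h p q ^+ 2)))) _.
    apply: ler_sum => p _; rewrite mulr_sumr; apply: ler_sum => q _.
    by rewrite -mulrDl mulrA; apply: pt.
  under eq_bigr do rewrite -mulr_sumr.
  rewrite -mulr_sumr; apply: ler_wpM2l; first by have := sqr_ge0 g; have := sqr_ge0 L; lra.
  under eq_bigr do rewrite big_split /=.
  rewrite big_split /=.
  have -> : 4 * r%:R * e ^+ 2 = r%:R * (2 * e ^+ 2) + r%:R * (2 * e ^+ 2) by ring.
  apply: lerD; first exact: (part (F := fun p q => f p q ^+ 2 + h p q ^+ 2) d1 r rowF F0).
  rewrite exchange_big /=.
  exact: (part (F := fun q p => f p q ^+ 2 + h p q ^+ 2) d2 r colF (fun q p => F0 p q)).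
pose T := Num.sqrt (sA r * sA 0%N) / del.
have T0 : 0 <= T by rewrite divr_ge0 ?sqrtr_ge0 // ltW.
have sT : sA r <= T * del.
  rewrite /T divfK; last by rewrite gt_eqF.
  rewrite -[X in X <= _](ger0_norm (sA0 r)) -sqrtr_sqr ler_sqrt; last by rewrite mulr_ge0.
  by rewrite expr2 ler_wpM2l // (noninc sAd (leq0n r)).
have Sb : S <= 81 * r%:R * e ^+ 2 * (1 + T) ^+ 2.
  apply: (final_arith dp e0 (ler0n _ _) (sA0 r) sT T0 hE).
  exact: SB.
rewrite /frob (frob_inv _ oUB oVA) -/S.
have R0 : 0 <= 9 * Num.sqrt r%:R * e * (1 + T).
  by rewrite !mulr_ge0 ?sqrtr_ge0 ?addr_ge0 //; lra.
rewrite -/T -[X in _ <= X](ger0_norm R0) -sqrtr_sqr ler_sqrt ?sqr_ge0 //.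
apply: le_trans Sb _; rewrite !exprMn sqr_sqrtr ?ler0n //.
have -> : (9 : R) ^+ 2 = 81 by rewrite expr2; lra.
by [].
Qed.
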